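(* Let $V$ be a vector space of countably infinite dimension over a field $\mathbb{F}$, and let $u$ be an endomorphism of $V$ with no dominant eigenvalue such that $V^u$ is a torsion $\mathbb{F}[t]$-module. Then $V^u$ has a good stratification.
   Context: A scalar $\lambda$ is a dominant eigenvalue of $u$ if $\operatorname{rk}(u-\lambda\,\mathrm{id}_V)<\dim V$. $V^u$ is the $\mathbb{F}[t]$-module with underlying space $V$ and $t\cdot x:=u(x)$. A stratification of a non-zero $\mathbb{F}[t]$-module $M$ is an increasing family $(M_\alpha)_{\alpha\in D}$ of submodules indexed by a well-ordered set $D$ such that each quotient $M_\alpha/\sum_{\beta<\alpha}M_\beta$ is non-zero and monogenous (cyclic), and $M=\sum_{\alpha\in D}M_\alpha$; its dimension sequence is $n_\alpha:=\dim_{\mathbb{F}}(M_\alpha/\sum_{\beta<\alpha}M_\beta)\in\mathbb{N}^*\cup\{+\infty\}$. It is good if (a) $n_\alpha\ge 2$ whenever $\alpha$ is the minimum of $D$ or the successor of some element of $D$, and (b) $D$ has no maximum. *)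

(* Defs.v *)
From HB Require Import structures.
From mathcomp Require Import all_boot all_order all_algebra.
Set Implicit Arguments. Unset Strict Implicit. Unset Printing Implicit Defensive.
Import GRing.Theory.
Local Open Scope ring_scope.

Section Defs.
Variables (F : fieldType) (V : lmodType F).

Definition nat_basis (e : nat -> V) : Prop :=
  (forall (n : nat) (c : nat -> F),
      \sum_(i < n) c i *: e i = 0 -> forall i, (i < n)%N -> c i = 0)
  /\ (forall x : V, exists (n : nat) (c : nat -> F), x = \sum_(i < n) c i *: e i).

Definition countably_infinite_dim : Prop := exists e : nat -> V, nat_basis e.

Definition finite_rank (f : V -> V) : Prop :=
  exists (n : nat) (s : nat -> V),
    forall x : V, exists c : nat -> F, f x = \sum_(i < n) c i *: s i.

(** [l] is a dominant eigenvalue of [u] : rk (u - l id_V) < dim V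
    (with dim V countably infinite, this means the rank is finite). *)
Definition dominant_eigenvalue (u : V -> V) (l : F) : Prop :=
  finite_rank (fun x => u x - l *: x).

(** action of a polynomial p on V^u : p . x = p(u)(x) *)
Definition pact (u : V -> V) (p : {poly F}) (x : V) : V :=
  \sum_(i < size p) p`_i *: iter i u x.

Definition torsion (u : V -> V) : Prop :=
  forall x : V, exists p : {poly F}, p != 0 /\ pact u p x = 0.

Definition submodule (u : V -> V) (S : V -> Prop) : Prop :=
  S 0 /\ (forall x y, S x -> S y -> S (x + y))
  /\ (forall (a : F) x, S x -> S (a *: x)) /\ (forall x, S x -> S (u x)).

Definition sum_fam (D : Type) (M : D -> V -> Prop) (P : D -> Prop) (x : V) : Prop :=
  exists (n : nat) (b : nat -> D) (y : nat -> V),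
    (forall i, (i < n)%N -> P (b i) /\ M (b i) (y i)) /\ x = \sum_(i < n) y i.

Definition quot_nonzero (Q S : V -> Prop) : Prop := exists x, Q x /\ ~ S x.

Definition quot_monogenous (u : V -> V) (Q S : V -> Prop) : Prop :=
  exists g, Q g /\ forall x, Q x -> exists p : {poly F}, S (x - pact u p g).

Definition quot_dim_ge2 (Q S : V -> Prop) : Prop :=
  exists x y, Q x /\ Q y /\
    forall a b : F, S (a *: x + b *: y) -> a = 0 /\ b = 0.

End Defs.

Definition well_order (D : Type) (lt : D -> D -> Prop) : Prop :=
  (forall a, ~ lt a a) /\ (forall a b c, lt a b -> lt b c -> lt a c)
  /\ (forall a b, lt a b \/ a = b \/ lt b a) /\ well_founded lt.

Definition is_minimum (D : Type) (lt : D -> D -> Prop) (a : D) : Prop :=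
  forall b, ~ lt b a.

Definition is_successor (D : Type) (lt : D -> D -> Prop) (a : D) : Prop :=
  exists b, lt b a /\ forall c, ~ (lt b c /\ lt c a).

Section Strat.
Variables (F : fieldType) (V : lmodType F).

Definition sum_below (D : Type) (lt : D -> D -> Prop) (M : D -> V -> Prop) (a : D) :
  V -> Prop := sum_fam M (fun b => lt b a).

Definition stratification (u : V -> V) (D : Type) (lt : D -> D -> Prop)
    (M : D -> V -> Prop) : Prop :=
  well_order lt
  /\ (forall a, submodule u (M a))
  /\ (forall a b, lt a b -> forall x, M a x -> M b x)
  /\ (forall a, quot_nonzero (M a) (sum_below lt M a)
                /\ quot_monogenous u (M a) (sum_below lt M a))
  /\ (forall x : V, sum_fam M (fun _ => True) x).

Definition good_stratification (u : V -> V) (D : Type) (lt : D -> D -> Prop)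
    (M : D -> V -> Prop) : Prop :=
  stratification u lt M
  /\ (forall a, is_minimum lt a \/ is_successor lt a ->
                quot_dim_ge2 (M a) (sum_below lt M a))
  /\ (forall a, exists b, lt a b).

Definition has_good_stratification (u : V -> V) : Prop :=
  exists (D : Type) (lt : D -> D -> Prop) (M : D -> V -> Prop),
    good_stratification u lt M.
End Strat.

(* Main.v *)
Require Import Defs.
From HB Require Import structures.
From mathcomp Require Import all_boot all_order all_algebra.
From Stdlib Require Import Classical ClassicalEpsilon.
Set Implicit Arguments. Unset Strict Implicit. Unset Printing Implicit Defensive.
Import GRing.Theory.
Local Open Scope ring_scope.

Section Pact.
Variables (F : fieldType) (V : lmodType F) (u : {linear V -> V}).

Lemma pactE (p : {poly F}) x n : (size p <= n)%N ->
  pact u p x = \sum_(i < n) p`_i *: iter i u x.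
Proof.
move=> H; rewrite /pact (big_ord_widen n (fun i => p`_i *: iter i u x) H) big_mkcond.
apply: eq_bigr => i _; case: ifP => // /negbT; rewrite -leqNgt => Hi.
by rewrite nth_default // scale0r.
Qed.

Lemma pactD p q x : pact u (p + q) x = pact u p x + pact u q x.
Proof.
rewrite (pactE _ (leq_maxl (size p) (size q))).
rewrite (pactE _ (leq_maxr (size p) (size q))).
rewrite (pactE _ (leq_trans (size_polyD p q) (leqnn _))).
by rewrite -big_split /=; apply: eq_bigr => i _; rewrite coefD scalerDl.
Qed.

Lemma pactZ a p x : pact u (a *: p) x = a *: pact u p x.
Proof.
rewrite (pactE _ (size_scale_leq a p)) (pactE x (leqnn (size p))) scaler_sumr.
by apply: eq_bigr => i _; rewrite coefZ scalerA.
Qed.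

Lemma pact0 x : pact u 0 x = 0.
Proof. by rewrite /pact size_poly0 big_ord0. Qed.

Lemma pactC c x : pact u c%:P x = c *: x.
Proof.
rewrite (pactE _ (size_polyC_leq1 c)) big_ord_recl big_ord0 addr0 coefC /=.
by [].
Qed.

Lemma pact_x0 p : pact u p 0 = 0.
Proof.
rewrite /pact big1 // => i _.
have ->: iter i u 0 = 0 by elim: (nat_of_ord i) => //= n ->; rewrite linear0.
by rewrite scaler0.
Qed.

Lemma pact_xD p x y : pact u p (x + y) = pact u p x + pact u p y.
Proof.
rewrite /pact -big_split /=; apply: eq_bigr => i _.
have ->: iter i u (x + y) = iter i u x + iter i u y.
  by elim: (nat_of_ord i) => //= n ->; rewrite linearD.
by rewrite scalerDr.
Qed.

Lemma iterZ i a x : iter i u (a *: x) = a *: iter i u x.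
Proof. by elim: i => //= n ->; rewrite linearZ. Qed.

Lemma pact_xZ p a x : pact u p (a *: x) = a *: pact u p x.
Proof.
rewrite /pact scaler_sumr; apply: eq_bigr => i _.
by rewrite iterZ !scalerA mulrC.
Qed.

Lemma pactXM p x : pact u ('X * p) x = u (pact u p x).
Proof.
have H : (size ('X * p)%R <= (size p).+1)%N.
  have [->|p0] := eqVneq p 0; first by rewrite mulr0 size_poly0.
  by rewrite mulrC size_mulX.
rewrite (pactE _ H) big_ord_recl coefXM /= scale0r add0r /pact linear_sum.
apply: eq_bigr => i _; rewrite coefXM /= linearZ /=; congr (_ *: _).
Qed.
Lemma pact1 x : pact u 1 x = x.
Proof. by rewrite -polyC1 pactC scale1r. Qed.

Lemma pactX x : pact u 'X x = u x.
Proof. by rewrite -(mulr1 'X) pactXM pact1. Qed.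

Lemma pactM r a y : pact u (r * a) y = pact u r (pact u a y).
Proof.
elim/poly_ind: r a y => [|r c IH] a y; first by rewrite mul0r !pact0.
rewrite mulrDl pactD -mulrA IH pactXM mul_polyC pactZ.
by rewrite pactD IH pactX pactC.
Qed.
End Pact.

Section SumFam.
Variables (F : fieldType) (V : lmodType F).
Variable (D : Type) (d0 : D).
Implicit Types (M : D -> V -> Prop) (P : D -> Prop).

Lemma sum_fam0 M P : sum_fam M P 0.
Proof. by exists 0%N, (fun _ => d0), (fun _ => 0); split => //; rewrite big_ord0. Qed.

Lemma sum_fam_add M P x y : sum_fam M P x -> sum_fam M P y -> sum_fam M P (x + y).
Proof.
move=> [n [b [z [Hz ->]]]] [m [b' [z' [Hz' ->]]]].
exists (n + m)%N, (fun i => if (i < n)%N then b i else b' (i - n)%N),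
  (fun i => if (i < n)%N then z i else z' (i - n)%N); split.
  move=> i Hi; case: ifP => Hin; first exact: Hz.
  by apply: Hz'; rewrite ltn_subLR // leqNgt Hin.
rewrite big_split_ord /=; congr (_ + _); apply: eq_bigr => i _ /=.
  by rewrite ltn_ord.
by rewrite ltnNge leq_addr /= addKn.
Qed.

Lemma sum_fam_single M P b y : P b -> M b y -> sum_fam M P y.
Proof.
move=> Pb My; exists 1%N, (fun _ => b), (fun _ => y); split => //.
by rewrite big_ord_recl big_ord0 addr0.
Qed.

Lemma sum_fam_sub M P (S : V -> Prop) : S 0 -> (forall x y, S x -> S y -> S (x + y)) ->
  (forall b y, P b -> M b y -> S y) -> forall x, sum_fam M P x -> S x.
Proof.
move=> S0 SD SM x [n [b [z [Hz ->]]]]; elim: n Hz => [|n IH] Hz.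
  by rewrite big_ord0.
rewrite big_ord_recr /=; apply: SD.
  by apply: IH => i Hi; apply: Hz; apply: ltnW.
by have [H1 H2] := Hz n (ltnSn n); apply: SM H2.
Qed.

Lemma sum_fam_mono M M' P Q x : (forall b, P b -> Q b) ->
  (forall b y, P b -> M b y -> M' b y) -> sum_fam M P x -> sum_fam M' Q x.
Proof.
move=> PQ MM [n [b [z [Hz ->]]]]; exists n, b, z; split => // i Hi.
by have [H1 H2] := Hz i Hi; split; [apply: PQ | apply: MM].
Qed.

Lemma sum_fam_Z M P a x : (forall b y, M b y -> M b (a *: y)) ->
  sum_fam M P x -> sum_fam M P (a *: x).
Proof.
move=> HM [n [b [z [Hz ->]]]]; exists n, b, (fun i => a *: z i); split.
  by move=> i Hi; have [H1 H2] := Hz i Hi; split => //; apply: HM.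
by rewrite scaler_sumr.
Qed.

Lemma sum_fam_lin M P (f : {linear V -> V}) x : (forall b y, M b y -> M b (f y)) ->
  sum_fam M P x -> sum_fam M P (f x).
Proof.
move=> HM [n [b [z [Hz ->]]]]; exists n, b, (fun i => f (z i)); split.
  by move=> i Hi; have [H1 H2] := Hz i Hi; split => //; apply: HM.
by rewrite linear_sum.
Qed.
End SumFam.

Section Gen.
Variables (F : fieldType) (V : lmodType F) (u : {linear V -> V}).
Variable (D : Type) (d0 : D) (g : D -> V).

Definition cyc (b : D) (y : V) := exists p, y = pact u p (g b).
Definition GenP (P : D -> Prop) := sum_fam cyc P.
Definition good (M : V -> Prop) (x : V) :=
  forall a b : F, M (a *: x + b *: u x) -> a = 0 /\ b = 0.

Lemma cyc_Z b y a : cyc b y -> cyc b (a *: y).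
Proof. by move=> [p ->]; exists (a *: p); rewrite pactZ. Qed.

Lemma cyc_u b y : cyc b y -> cyc b (u y).
Proof. by move=> [p ->]; exists ('X * p); rewrite pactXM. Qed.

Lemma GenP_sub P : submodule u (GenP P).
Proof.
split; first exact: sum_fam0.
split; first by move=> x y; apply: sum_fam_add.
split; first by move=> a x; apply: sum_fam_Z => b y; apply: cyc_Z.
by move=> x; apply: sum_fam_lin => b y; apply: cyc_u.
Qed.

Lemma GenP_gen P b : P b -> GenP P (g b).
Proof. by move=> Pb; apply: sum_fam_single; first exact: Pb; exists 1; rewrite pact1. Qed.

Lemma GenP_mono P Q x : (forall b, P b -> Q b) -> GenP P x -> GenP Q x.
Proof. by move=> PQ; apply: sum_fam_mono. Qed.

End Gen.

Lemma GenP_ext (F : fieldType) (V : lmodType F) (u : {linear V -> V}) D (g g' : D -> V) P x :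
  (forall b, P b -> g b = g' b) -> GenP u g P x -> GenP u g' P x.
Proof.
move=> E; apply: sum_fam_mono => // b y Pb [p ->]; exists p; by rewrite E.
Qed.

Section Sub.
Variables (F : fieldType) (V : lmodType F) (u : {linear V -> V}).

Lemma subN S x : submodule u S -> S x -> S (- x).
Proof. by move=> [_ [_ [SZ _]]] Sx; rewrite -scaleN1r; apply: SZ. Qed.

Lemma subB S x y : submodule u S -> S x -> S y -> S (x - y).
Proof. by move=> HS Sx Sy; have [_ [SD _]] := HS; apply: SD => //; apply: subN. Qed.

Lemma subD S x y : submodule u S -> S x -> S y -> S (x + y).
Proof. by move=> [_ [SD _]]; apply: SD. Qed.

Lemma subZ S a x : submodule u S -> S x -> S (a *: x).
Proof. by move=> [_ [_ [SZ _]]]; apply: SZ. Qed.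

Lemma subU S x : submodule u S -> S x -> S (u x).
Proof. by move=> [_ [_ [_ SU]]]; apply: SU. Qed.

Lemma sub0 S : submodule u S -> S 0.
Proof. by case. Qed.

Lemma sub_sum S n (f : nat -> V) : submodule u S -> (forall i, (i < n)%N -> S (f i)) ->
  S (\sum_(i < n) f i).
Proof.
move=> HS; elim: n => [|n IH] H; first by rewrite big_ord0; apply: sub0.
rewrite big_ord_recr /=; apply: subD => //; first by apply: IH => i Hi; apply: H; apply: ltnW.
exact: H.
Qed.

Lemma sub_pact S p y : submodule u S -> S y -> S (pact u p y).
Proof.
move=> HS Sy; have := @sub_sum S (size p) (fun i => p`_i *: iter i u y) HS; apply.
move=> i _; apply: subZ => //.
by elim: i => //= i IH; apply: subU.
Qed.

Lemma GenP_min D (g : D -> V) P S x : submodule u S -> (forall b, P b -> S (g b)) ->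
  GenP u g P x -> S x.
Proof.
move=> HS Hg; apply: sum_fam_sub; [exact: sub0 | by move=> ??; apply: subD |].
by move=> b y Pb [p ->]; apply: sub_pact => //; apply: Hg.
Qed.

Lemma sub_scale_inv S a x : submodule u S -> a != 0 -> S (a *: x) -> S x.
Proof.
by move=> HS a0 H; have := subZ a^-1 HS H; rewrite scalerA mulVf // scale1r.
Qed.
End Sub.

Section StratGen.
Variables (F : fieldType) (V : lmodType F) (u : {linear V -> V}).
Variables (D : Type) (d0 : D) (lt : D -> D -> Prop) (g : D -> V).

Let Mf (a : D) := GenP u g (fun b => lt b a \/ b = a).

Lemma below_eq (wo : well_order lt) a x :
  sum_below lt Mf a x <-> GenP u g (fun b => lt b a) x.
Proof.
have [_ [tr _]] := wo.
split.
  apply: sum_fam_sub; [exact: sum_fam0 | by move=> ??; apply: sum_fam_add |].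
  move=> b y ba; apply: GenP_mono => c [cb|->] //; exact: tr cb ba.
apply: sum_fam_mono => // b y ba cy; apply: sum_fam_single; last exact: cy.
by right.
Qed.

Lemma strat_of_gen : well_order lt -> (forall a, exists b, lt a b) ->
  (forall a, ~ GenP u g (fun b => lt b a) (g a)) ->
  (forall a, is_minimum lt a \/ is_successor lt a -> good u (GenP u g (fun b => lt b a)) (g a)) ->
  (forall x, GenP u g (fun _ => True) x) ->
  has_good_stratification u.
Proof.
move=> wo nomax nz gd cov.
have [irr [tr _]] := wo.
exists D, lt, Mf; split; last split => //.
  split => //; split; first by move=> a; apply: GenP_sub.
  split.
    move=> a b ab x; apply: GenP_mono => c [ca|->]; left => //; exact: tr ca ab.
  split.
    move=> a; split.
      exists (g a); split; first by apply: GenP_gen => //; right.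
      by rewrite below_eq //; apply: nz.
    exists (g a); split; first by apply: GenP_gen => //; right.
    apply: (sum_fam_sub (S := fun x => exists p, sum_below lt Mf a (x - pact u p (g a)))).
    - by exists 0; rewrite pact0 subr0; apply: sum_fam0.
    - move=> x1 x2 [p1 H1] [p2 H2]; exists (p1 + p2); rewrite pactD.
      have -> : x1 + x2 - (pact u p1 (g a) + pact u p2 (g a)) =
          (x1 - pact u p1 (g a)) + (x2 - pact u p2 (g a)) by rewrite opprD addrACA.
      by apply: sum_fam_add.
    - move=> b y [ba|->] [q ->].
        exists 0; rewrite pact0 subr0; apply: sum_fam_single; first exact: ba.
        by apply: sum_fam_single; [right | exists q].
      by exists q; rewrite subrr; apply: sum_fam0.
  move=> x; apply: sum_fam_mono (cov x) => // b y _ cy.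
  by apply: sum_fam_single; last exact: cy; right.
move=> a Ha; exists (g a), (u (g a)); split; first by apply: GenP_gen => //; right.
split.
  apply: subU; first exact: GenP_sub.
  by apply: GenP_gen => //; right.
by move=> x y; rewrite below_eq //; apply: gd.
Qed.
End StratGen.

Section TOps.
Variables (F : fieldType) (V : lmodType F) (u : {linear V -> V}).

Definition T (l : F) (x : V) := u x - l *: x.

Lemma alg1 (c b : F) (x t w : V) : c != 0 ->
  x = (- t - (b / c) *: w) + c^-1 *: (c *: (x + t) + b *: w).
Proof.
move=> c0; rewrite scalerDr scalerA mulVf // scale1r scalerA (mulrC c^-1).
by rewrite addrACA addNr addr0 addrC addrK.
Qed.

Lemma comb_eq (a b l : F) (g t : V) :
  a *: g + b *: (t + l *: g) = (a + b * l) *: g + b *: t.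
Proof.
rewrite scalerDr scalerDl [b *: (l *: g)]scalerA.
by rewrite addrC -addrA addrC (addrC ((b * l) *: g)).
Qed.

Lemma TD l x y : T l (x + y) = T l x + T l y.
Proof. by rewrite /T linearD scalerDr opprD addrACA. Qed.

Lemma TZ l a x : T l (a *: x) = a *: T l x.
Proof. by rewrite /T linearZ scalerBr !scalerA mulrC. Qed.

Lemma TN l x : T l (- x) = - T l x.
Proof. by rewrite -scaleN1r TZ scaleN1r. Qed.

Lemma TB l x y : T l (x - y) = T l x - T l y.
Proof. by rewrite TD TN. Qed.

Lemma T0 l : T l 0 = 0.
Proof. by rewrite /T linear0 scaler0 subr0. Qed.

Lemma uT l x : u x = T l x + l *: x.
Proof. by rewrite /T subrK. Qed.

Lemma subT S l x : submodule u S -> S x -> S (T l x).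
Proof. by move=> HS Sx; rewrite /T; apply: (subB HS); [apply: (subU HS) | apply: (subZ _ HS)]. Qed.

Lemma goodG M l x : submodule u M -> ~ M (T l x) -> M (T l (T l x)) -> good u M x.
Proof.
move=> HS nT TT a b H.
have E : a *: x + b *: u x = (a + b * l) *: x + b *: T l x.
  rewrite (uT l x) scalerDr scalerDl scalerA.
  by rewrite addrC -addrA addrC (addrC ((b * l) *: x)).
rewrite E in H.
have H2 := subT l HS H.
rewrite TD !TZ in H2.
have H3 : M ((a + b * l) *: T l x).
  by have := subB HS H2 (subZ b HS TT); rewrite addrK.
have c0 : a + b * l = 0.
  by apply: NNPP => c0; apply: nT; apply: (sub_scale_inv HS _ H3); apply/eqP.
rewrite c0 scale0r add0r in H.
have b0 : b = 0.
  by apply: NNPP => b0; apply: nT; apply: (sub_scale_inv HS _ H); apply/eqP.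
by split => //; move: c0; rewrite b0 mul0r addr0.
Qed.

Definition spanL (s : seq V) (x : V) :=
  exists c : nat -> F, x = \sum_(i < size s) c i *: s`_i.
Definition fd (M : V -> Prop) := exists s : seq V, forall x, M x -> spanL s x.

Lemma fd_rank M f : fd M -> (forall y, M (f y)) -> finite_rank f.
Proof.
move=> [s Hs] Hf; exists (size s), (fun i => s`_i) => x.
by have [c ->] := Hs _ (Hf x); exists c.
Qed.

Lemma not_good M x : ~ good u M x ->
  exists a b, M (a *: x + b *: u x) /\ (a != 0 \/ b != 0).
Proof.
move=> ng; apply: NNPP => H; apply: ng => a b Hab; split; apply: NNPP => Hn.
  by apply: H; exists a, b; split => //; left; apply/eqP.
by apply: H; exists a, b; split => //; right; apply/eqP.
Qed.

Lemma eigen_of_not_good M x : submodule u M -> ~ M x -> ~ good u M x ->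
  exists l, M (T l x).
Proof.
move=> HS nx /not_good [a [b [H ab]]].
have [b0|b0] := eqVneq b 0.
  move: H ab; rewrite b0 scale0r addr0 eqxx => H [a0|//].
  by exfalso; apply: nx; apply: (sub_scale_inv HS a0 H).
exists (- (a / b)); have := subZ b^-1 HS H.
rewrite scalerDr !scalerA mulVf // scale1r /T scaleNr opprK addrC.
by rewrite mulrC.
Qed.
End TOps.

Section NonExc.
Variables (F : fieldType) (V : lmodType F) (u : {linear V -> V}).
Hypothesis NE : forall l, ~ finite_rank (fun x => T u l (T u l x)).

Definition Ext (M : V -> Prop) (g x : V) :=
  forall M1 : V -> Prop, submodule u M1 -> (forall y, M y -> M1 y) -> M1 g ->
    M1 x \/ exists v, good u M1 v /\
      forall M2 : V -> Prop, submodule u M2 -> (forall y, M1 y -> M2 y) -> M2 v -> M2 x.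

Lemma TT_notin M l : fd M -> exists s, ~ M (T u l (T u l s)).
Proof.
move=> fdM; apply: NNPP => H; apply: (@NE l); apply: (fd_rank fdM) => y.
by apply: NNPP => Hy; apply: H; exists y.
Qed.

Lemma P1core M x : submodule u M -> fd M -> ~ M x -> exists g, good u M g /\ Ext M g x.
Proof.
move=> HS fdM nx.
case: (classic (good u M x)) => [gx|ngx].
  by exists x; split => // M1 _ _ H; left.
have [l Tx] := eigen_of_not_good HS nx ngx.
case: (classic (exists v m, M m /\ x = T u l v + m)) => [[v [m [Mm xE]]]|nE].
  exists v; split.
    apply: (goodG (l := l) HS).
      by move=> Tv; apply: nx; rewrite xE; apply: (subD HS).
    have -> : T u l (T u l v) = T u l x - T u l m by rewrite xE (@TD _ _ u l (T u l v) m) addrK.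
    by apply: (subB HS) => //; apply: subT.
  move=> M1 HS1 MM1 M1v; left; rewrite xE; apply: (subD HS1); last exact: MM1.
  exact: subT.
have [s Hs] := TT_notin l fdM.
exists (x + T u l s); split.
  move=> a b H.
  have E : a *: (x + T u l s) + b *: u (x + T u l s) =
     (a + b * l) *: (x + T u l s) + b *: T u l (x + T u l s).
    by rewrite (uT u l (x + T u l s)) comb_eq.
  rewrite E TD in H.
  have H2 : M ((a + b * l) *: (x + T u l s) + b *: T u l (T u l s)).
    have := subB HS H (subZ b HS Tx).
    by rewrite [b *: (T u l x + _)]scalerDr [b *: T u l x + _]addrC addrA addrK.
  have c0 : a + b * l = 0.
    apply: NNPP => c0; apply: nE.
    set c := a + b * l in H2 c0.
    exists (- s - (b / c) *: T u l s), (c^-1 *: ((c *: (x + T u l s) + b *: T u l (T u l s)))).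
    split; first exact: (subZ _ HS H2).
    rewrite TB TN TZ; apply: alg1; exact/eqP.
  rewrite c0 scale0r add0r in H2.
  have b0 : b = 0.
    by apply: NNPP => b0; apply: Hs; apply: (sub_scale_inv HS _ H2); apply/eqP.
  by split => //; move: c0; rewrite b0 mul0r addr0.
move=> M1 HS1 MM1 M1g.
case: (classic (M1 x)) => [|nx1]; first by left.
right; exists s; split.
  have h1 : ~ M1 (T u l s).
    by move=> H; apply: nx1; have := subB HS1 M1g H; rewrite addrK.
  have h2 : M1 (T u l (T u l s)).
    have -> : T u l (T u l s) = T u l (x + T u l s) - T u l x.
      by rewrite (@TD _ _ u l x (T u l s)) [T u l x + _]addrC addrK.
    by apply: (subB HS1); [apply: subT | apply: MM1].
  exact: (goodG HS1 h1 h2).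
move=> M2 HS2 M12 M2s.
have := subB HS2 (M12 _ M1g) (subT l HS2 M2s); by rewrite addrK.
Qed.

Lemma Gex M : submodule u M -> fd M -> exists g, good u M g.
Proof.
move=> HS fdM; have [s Hs] := TT_notin 0 fdM.
have ns : ~ M s by move=> Ms; apply: Hs; do 2 apply: subT => //.
by have [g [gg _]] := P1core HS fdM ns; exists g.
Qed.

Lemma P1 M x : submodule u M -> fd M -> exists g, good u M g /\ Ext M g x.
Proof.
move=> HS fdM; case: (classic (M x)) => [Mx|nx]; last exact: P1core.
have [g gg] := Gex HS fdM; exists g; split => // M1 _ MM1 _; left; exact: MM1.
Qed.

Lemma P2 M1 x : submodule u M1 -> fd M1 ->
  (M1 x \/ exists v, good u M1 v /\
      forall M2 : V -> Prop, submodule u M2 -> (forall y, M1 y -> M2 y) -> M2 v -> M2 x) ->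
  exists g, good u M1 g /\
    forall M2 : V -> Prop, submodule u M2 -> (forall y, M1 y -> M2 y) -> M2 g -> M2 x.
Proof.
move=> HS fdM [Mx|[v [gv Hv]]]; last by exists v.
have [g gg] := Gex HS fdM; exists g; split => // M2 _ M12 _; exact: M12.
Qed.
End NonExc.

Section Span.
Variables (F : fieldType) (V : lmodType F) (u : {linear V -> V}).
Implicit Types (s t : seq V) (x y : V).

Lemma spanL0 s : spanL s 0.
Proof. by exists (fun _ => 0); rewrite big1 // => i _; rewrite scale0r. Qed.

Lemma spanLD s x y : spanL s x -> spanL s y -> spanL s (x + y).
Proof.
move=> [c ->] [d ->]; exists (fun i => c i + d i); rewrite -big_split.
by apply: eq_bigr => i _; rewrite scalerDl.
Qed.

Lemma spanLZ s a x : spanL s x -> spanL s (a *: x).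
Proof.
move=> [c ->]; exists (fun i => a * c i); rewrite scaler_sumr.
by apply: eq_bigr => i _; rewrite scalerA.
Qed.

Lemma spanL_catl s t x : spanL s x -> spanL (s ++ t) x.
Proof.
move=> [c ->]; exists (fun i => if (i < size s)%N then c i else 0).
rewrite size_cat big_split_ord /= [X in _ = _ + X]big1 ?addr0.
  by apply: eq_bigr => i _; rewrite ltn_ord nth_cat ltn_ord.
by move=> i _; rewrite ltnNge leq_addr /= scale0r.
Qed.

Lemma spanL_catr s t x : spanL t x -> spanL (s ++ t) x.
Proof.
move=> [c ->]; exists (fun i => if (i < size s)%N then 0 else c (i - size s)%N).
rewrite size_cat big_split_ord /= [X in _ = X + _]big1 ?add0r.
  by apply: eq_bigr => i _; rewrite ltnNge leq_addr /= nth_cat ltnNge leq_addr /= addKn.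
by move=> i _; rewrite ltn_ord scale0r.
Qed.

Lemma fd_cyc y : torsion u -> exists s, forall p, spanL s (pact u p y).
Proof.
move=> tors; have [a [a0 ay]] := tors y.
exists (mkseq (fun j => iter j u y) (size a)) => p.
have -> : pact u p y = pact u (p %% a) y.
  by rewrite {1}(divp_eq p a) pactD pactM ay pact_x0 add0r.
exists (fun i => (p %% a)`_i); rewrite size_mkseq (pactE u y (ltnW (ltn_modpN0 p a0))).
by apply: eq_bigr => i _; rewrite nth_mkseq.
Qed.

Lemma fd_GenP_lt (g : nat -> V) k : torsion u -> fd (GenP u g (fun b => (b < k)%N)).
Proof.
move=> tors.
have [s Hs] : exists s, forall b, (b < k)%N -> forall p, spanL s (pact u p (g b)).
  elim: k => [|k [s Hs]]; first by exists [::].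
  have [t Ht] := fd_cyc (g k) tors.
  exists (s ++ t) => b; rewrite ltnS leq_eqVlt => /orP [/eqP ->|bk] p.
    exact: spanL_catr.
  exact/spanL_catl/Hs.
exists s; apply: sum_fam_sub; [exact: spanL0 | by move=> ??; apply: spanLD |].
by move=> b y bk [p ->]; apply: Hs.
Qed.
End Span.

Lemma good_sub (F : fieldType) (V : lmodType F) (u : {linear V -> V}) (M M' : V -> Prop) g :
  (forall y, M' y -> M y) -> good u M g -> good u M' g.
Proof. by move=> MM gg a b H; apply: gg; apply: MM. Qed.

Lemma good_notin (F : fieldType) (V : lmodType F) (u : {linear V -> V}) (M : V -> Prop) g :
  good u M g -> ~ M g.
Proof.
move=> gg Mg; have [] := gg 1 0; first by rewrite scale1r scale0r addr0.
by move=> /eqP; rewrite oner_eq0.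
Qed.

Lemma wo_nat : well_order (fun a b : nat => (a < b)%N).
Proof.
split; first by move=> a; rewrite ltnn.
split; first by move=> a b c; apply: ltn_trans.
split; first by move=> a b; case: (ltngtP a b) => H; [left|right;right|right;left].
have H : forall n m, (m <= n)%N -> Acc (fun a b : nat => (a < b)%N) m.
  elim=> [|n IH] m Hm; constructor => y Hy.
    by move: Hm; rewrite leqn0 => /eqP Hm; move: Hy; rewrite Hm.
  by apply: IH; rewrite -ltnS; apply: leq_trans Hy Hm.
by move=> n; apply: (H n).
Qed.

Section NonExcFinal.
Variables (F : fieldType) (V : lmodType F) (u : {linear V -> V}).
Hypothesis NE : forall l, ~ finite_rank (fun x => T u l (T u l x)).
Hypothesis tors : torsion u.
Variable e : nat -> V.
Hypothesis Hb : nat_basis e.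

Definition SpecN (M : V -> Prop) (k : nat) (g : V) : Prop :=
  if odd k then good u M g /\ (forall M2 : V -> Prop, submodule u M2 ->
         (forall y, M y -> M2 y) -> M2 g -> M2 (e k./2))
  else good u M g /\ Ext u M g (e k./2).

Definition Mof (s : seq V) (k : nat) := GenP u (fun i => nth 0 s i) (fun b => (b < k)%N).

Definition nextN (s : seq V) (k : nat) : V :=
  epsilon (inhabits 0) (SpecN (Mof s k) k).

Fixpoint gseq k := match k with 0 => [::] | k'.+1 => rcons (gseq k') (nextN (gseq k') k') end.
Definition gs k := nextN (gseq k) k.

Lemma gseq_map k : gseq k = map gs (iota 0 k).
Proof.
elim: k => [//|k IH]; rewrite [gseq k.+1]/= -/(gs k) IH -addn1 iotaD map_cat cats1.
by [].
Qed.

Lemma nth_gseq k i : (i < k)%N -> nth 0 (gseq k) i = gs i.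
Proof. by move=> ik; rewrite gseq_map (nth_map 0) ?size_iota // nth_iota. Qed.

Lemma Mof_sub k : submodule u (Mof (gseq k) k).
Proof. exact: GenP_sub 0%N _ _. Qed.

Lemma Mof_fd k : fd (Mof (gseq k) k).
Proof. exact: fd_GenP_lt. Qed.

Lemma Mof_gs k x : GenP u gs (fun b => (b < k)%N) x <-> Mof (gseq k) k x.
Proof.
split; apply: GenP_ext => b bk; by rewrite nth_gseq.
Qed.

Lemma specN_even k : ~~ odd k -> SpecN (Mof (gseq k) k) k (gs k).
Proof.
move=> ev; rewrite /gs /nextN; apply: epsilon_spec; rewrite /SpecN (negbTE ev).
exact: P1 NE _ _ (Mof_sub k) (Mof_fd k).
Qed.

Lemma specN k : SpecN (Mof (gseq k) k) k (gs k).
Proof.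
case Ho: (odd k); last by apply: specN_even; rewrite Ho.
case: k Ho => [//|k] Ho.
have ev : ~~ odd k by move: Ho => /=; case: (odd k).
have Hext : Ext u (Mof (gseq k) k) (gs k) (e k./2).
  by have := specN_even ev; rewrite /SpecN (negbTE ev) => -[].
rewrite /gs /nextN; apply: epsilon_spec; rewrite /SpecN Ho.
have -> : k.+1./2 = k./2 by rewrite /= uphalf_half (negbTE ev).
apply: P2 NE _ _ (Mof_sub k.+1) (Mof_fd k.+1) _.
apply: Hext; first exact: Mof_sub.
  move=> y; rewrite -Mof_gs -Mof_gs; apply: GenP_mono => b bk; exact: ltnW.
by rewrite -Mof_gs; apply: GenP_gen.
Qed.

Lemma nonexc_strat : has_good_stratification u.
Proof.
apply: (@strat_of_gen F V u nat (fun a b : nat => (a < b)%N) gs).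
- exact: wo_nat.
- by move=> a; exists a.+1.
- move=> a; apply: good_notin.
  have := specN a; rewrite /SpecN; case: ifP => _ [gg _];
    by apply: good_sub gg => y; rewrite Mof_gs.
- move=> a _; have := specN a; rewrite /SpecN; case: ifP => _ [gg _];
    by apply: good_sub gg => y; rewrite Mof_gs.
have He : forall j, GenP u gs (fun _ => True) (e j).
  move=> j; have Ho : odd j.*2.+1 by rewrite /= odd_double.
  have Hh : (j.*2.+1)./2 = j by rewrite /= uphalf_double.
  have := specN j.*2.+1; rewrite /SpecN Ho Hh => -[_ H].
  apply: H; first exact: GenP_sub.
    by move=> y; rewrite -Mof_gs; apply: GenP_mono.
  exact: GenP_gen.
move=> x; have [_ sp] := Hb; have [n [c ->]] := sp x.
have := @sub_sum F V u (GenP u gs (fun _ => True)) n (fun i => c i *: e i)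
  (GenP_sub _ 0%N _ _); apply.
by move=> i _; apply: subZ; [exact: (GenP_sub _ 0%N) | exact: He].
Qed.
End NonExcFinal.

Section Coord.
Variables (F : fieldType) (V : lmodType F).
Variable e : nat -> V.
Hypothesis Hb : nat_basis e.
Implicit Types (c d : nat -> F) (n m N L p q : nat) (x y : V).

Definition cz (n : nat) (c : nat -> F) (p : nat) : F := if (p < n)%N then c p else 0.

Definition rep (x : V) : nat * (nat -> F) :=
  epsilon (inhabits (0%N, fun _ => 0)) (fun nc => x = \sum_(i < nc.1) nc.2 (nat_of_ord i) *: e i).

Definition coord (p : nat) (x : V) : F := cz (rep x).1 (rep x).2 p.

Lemma rep_spec x : x = \sum_(i < (rep x).1) (rep x).2 i *: e i.
Proof.
rewrite /rep; apply: (epsilon_spec (inhabits (0%N, fun _ => 0))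
  (fun nc => x = \sum_(i < nc.1) nc.2 (nat_of_ord i) *: e i)).
by have [_ sp] := Hb; have [n [c E]] := sp x; exists (n, c).
Qed.

Lemma sum_widen n N (c : nat -> F) : (n <= N)%N ->
  \sum_(i < n) c i *: e i = \sum_(i < N) cz n c i *: e i.
Proof.
move=> H; rewrite (big_ord_widen N (fun i => c i *: e i) H) big_mkcond.
by apply: eq_bigr => i _; rewrite /cz; case: ifP => //; rewrite scale0r.
Qed.

Lemma indep_ext n m c d : \sum_(i < n) c i *: e i = \sum_(i < m) d i *: e i ->
  forall p, cz n c p = cz m d p.
Proof.
move=> E p; have [ind _] := Hb.
set N := maxn n m.
rewrite (sum_widen c (leq_maxl n m)) (sum_widen d (leq_maxr n m)) in E.
have E2 : \sum_(i < N) (cz n c i - cz m d i) *: e i = 0.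
  transitivity (\sum_(i < N) cz n c i *: e i - \sum_(i < N) cz m d i *: e i);
    last by rewrite E subrr.
  by rewrite -sumrB; apply: eq_bigr => i _; rewrite scalerBl.
case: (ltnP p N) => pN.
  by apply/eqP; rewrite -subr_eq0; apply/eqP; exact: (ind N (fun i => cz n c i - cz m d i) E2 p pN).
rewrite /cz !ifF //; apply/negbTE; rewrite -leqNgt.
  by apply: leq_trans pN; apply: leq_maxr.
by apply: leq_trans pN; apply: leq_maxl.
Qed.

Lemma coordE n c p : coord p (\sum_(i < n) c i *: e i) = cz n c p.
Proof. by rewrite /coord; apply: indep_ext; rewrite -rep_spec. Qed.

Lemma coord_lin p a x y : coord p (a *: x + y) = a * coord p x + coord p y.
Proof.
set n := (rep x).1; set c := (rep x).2; set m := (rep y).1; set d := (rep y).2.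
have -> : a *: x + y = \sum_(i < maxn n m) (a * cz n c i + cz m d i) *: e i.
  rewrite {1}(rep_spec x) {1}(rep_spec y) -/n -/c -/m -/d.
  rewrite (sum_widen c (leq_maxl n m)) (sum_widen d (leq_maxr n m)) scaler_sumr -big_split.
  by apply: eq_bigr => i _; rewrite scalerDl scalerA.
rewrite (coordE _ (fun i => a * cz n c i + cz m d i)) /cz /coord -/n -/c -/m -/d /cz.
case: ifP => H.
  by [].
move: H; rewrite leq_max => /norP [Hn Hm].
by rewrite (negbTE Hn) (negbTE Hm) mulr0 addr0.
Qed.

Lemma coord0 p : coord p 0 = 0.
Proof.
have := coord_lin p 1 0 0; rewrite scale1r addr0 mul1r => H.
by apply: (addrI (coord p 0)); rewrite addr0 -H.
Qed.

Lemma coordD p x y : coord p (x + y) = coord p x + coord p y.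
Proof. by rewrite -[x]scale1r coord_lin mul1r scale1r. Qed.

Lemma coordZ p a x : coord p (a *: x) = a * coord p x.
Proof. by rewrite -[a *: x]addr0 coord_lin coord0 addr0. Qed.

Lemma coordN p x : coord p (- x) = - coord p x.
Proof. by rewrite -scaleN1r coordZ mulN1r. Qed.

Lemma coordB p x y : coord p (x - y) = coord p x - coord p y.
Proof. by rewrite coordD coordN. Qed.

Lemma coord_sum p n (f : nat -> V) : coord p (\sum_(i < n) f i) = \sum_(i < n) coord p (f i).
Proof.
elim: n => [|n IH]; first by rewrite !big_ord0 coord0.
by rewrite !big_ord_recr /= coordD IH.
Qed.

Lemma coord_inj x : (forall p, coord p x = 0) -> x = 0.
Proof.
move=> H; rewrite (rep_spec x) big1 // => i _.
by have := H i; rewrite /coord /cz ltn_ord => ->; rewrite scale0r.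
Qed.

Lemma coord_bound x : exists L, forall p, (L <= p)%N -> coord p x = 0.
Proof.
exists (rep x).1 => p Hp; by rewrite /coord /cz ltnNge Hp.
Qed.

Lemma expand L x : (forall p, (L <= p)%N -> coord p x = 0) ->
  x = \sum_(p < L) coord p x *: e p.
Proof.
move=> H; apply/eqP; rewrite -subr_eq0; apply/eqP; apply: coord_inj => q.
rewrite coordB (coordE _ (fun p => coord p x)) /cz; case: ifP => qL; first by rewrite subrr.
by rewrite H ?subrr // leqNgt qL.
Qed.

Lemma bound_fin n (f : nat -> V) : exists L, forall i, (i < n)%N ->
  forall p, (L <= p)%N -> coord p (f i) = 0.
Proof.
elim: n => [|n [L HL]]; first by exists 0%N.
have [L' HL'] := coord_bound (f n).
exists (maxn L L') => i; rewrite ltnS leq_eqVlt => /orP [/eqP ->|ilt] p Hp.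
  by apply: HL'; apply: leq_trans Hp; apply: leq_maxr.
by apply: HL => //; apply: leq_trans Hp; apply: leq_maxl.
Qed.

Lemma bound_span (s : seq V) : exists L, forall x, spanL s x ->
  forall p, (L <= p)%N -> coord p x = 0.
Proof.
have [L HL] := bound_fin (size s) (fun i => s`_i).
exists L => x [c ->] p Hp; rewrite (coord_sum _ _ (fun i => c i *: s`_i)) big1 // => i _.
by rewrite coordZ HL // mulr0.
Qed.
End Coord.

Section FC.
Variables (F : fieldType) (V : lmodType F).

Definition linf (f : V -> F) := forall a x y, f (a *: x + y) = a * f x + f y.

Lemma FC n (fs : nat -> V -> F) : (forall i, linf (fs i)) ->
  exists cs : seq V, forall x, exists y,
    (forall i, (i < n)%N -> fs i y = 0) /\ spanL cs (x - y).
Proof.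
move=> lin; elim: n => [|n [cs IH]].
  exists [::] => x; exists x; split => //; rewrite subrr; exact: spanL0.
case: (classic (exists y0, (forall i, (i < n)%N -> fs i y0 = 0) /\ fs n y0 <> 0)).
  move=> [y0 [Hy0 fy0]]; exists (cs ++ [:: y0]) => x.
  have [y [Hy Hsp]] := IH x.
  set k := fs n y / fs n y0.
  exists ((- k) *: y0 + y); split.
    move=> i; rewrite ltnS leq_eqVlt => /orP [/eqP ->|ilt].
      by rewrite lin /k mulNr mulfVK ?addNr //; apply/eqP.
    by rewrite lin Hy0 // Hy // mulr0 addr0.
  have -> : x - ((- k) *: y0 + y) = (x - y) + k *: y0.
    by rewrite opprD scaleNr opprK addrA addrAC.
  apply: spanLD; first exact: spanL_catl.
  apply: spanL_catr; apply: spanLZ; exists (fun _ => 1).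
  by rewrite big_ord_recl big_ord0 addr0 scale1r.
move=> H; exists cs => x; have [y [Hy Hsp]] := IH x; exists y; split => //.
move=> i; rewrite ltnS leq_eqVlt => /orP [/eqP ->|ilt]; last exact: Hy.
by apply: NNPP => fy; apply: H; exists y.
Qed.
End FC.

Lemma T_sum (F : fieldType) (V : lmodType F) (u : {linear V -> V}) l n (f : nat -> V) :
  T u l (\sum_(i < n) f i) = \sum_(i < n) T u l (f i).
Proof.
elim: n => [|n IH]; first by rewrite !big_ord0 T0.
by rewrite !big_ord_recr /= TD IH.
Qed.

Section ExcR.
Variables (F : fieldType) (V : lmodType F) (u : {linear V -> V}).
Variable e : nat -> V.
Hypothesis Hb : nat_basis e.
Variable mu : F.
Hypothesis NoDom : ~ finite_rank (T u mu).
Hypothesis Hex : finite_rank (fun x => T u mu (T u mu x)).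

Local Notation T' := (T u mu).
Local Notation crd := (coord e).

Lemma linf_c p : linf (crd p).
Proof. by move=> a x y; rewrite (coord_lin Hb). Qed.

Lemma linf_cT p : linf (fun v => crd p (T' v)).
Proof. by move=> a x y; rewrite TD TZ (coord_lin Hb). Qed.

Lemma linf_cTT p : linf (fun v => crd p (T' (T' v))).
Proof. by move=> a x y; rewrite [T' (a *: x + y)]TD [T' (a *: x)]TZ TD TZ (coord_lin Hb). Qed.

Lemma Kbound : exists K, forall x p, (K <= p)%N -> crd p (T' (T' x)) = 0.
Proof.
have [n [s Hs]] := Hex; have [L HL] := bound_fin e n s.
exists L => x p Hp; have [c ->] := Hs x.
rewrite (coord_sum Hb _ _ (fun i => c i *: s i)) big1 // => i _.
by rewrite (coordZ Hb) HL // mulr0.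
Qed.

Lemma lemR m (pv : nat -> nat) L : exists v, T' (T' v) = 0 /\
  (forall j, (j < m)%N -> crd (pv j) v = 0 /\ crd (pv j) (T' v) = 0) /\
  exists p, (L <= p)%N /\ crd p (T' v) <> 0.
Proof.
have [K HK] := Kbound.
pose fs i := if (i < K)%N then (fun v => crd i (T' (T' v)))
  else if (i < K + m)%N then (fun v => crd (pv (i - K)%N) v)
  else (fun v => crd (pv (i - K - m)%N) (T' v)).
have lin : forall i, linf (fs i).
  move=> i; rewrite /fs; case: ifP => _; first exact: linf_cTT.
  case: ifP => _; [exact: linf_c | exact: linf_cT].
have [cs Hcs] := FC (K + m + m) lin.
case: (classic (exists v, (forall i, (i < K + m + m)%N -> fs i v = 0) /\
   ~ (forall p, (L <= p)%N -> crd p (T' v) = 0))).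
  move=> [v [Hv nv]]; exists v; split.
    apply: (coord_inj Hb) => p; case: (ltnP p K) => pK; last exact: HK.
    by have := Hv p; rewrite /fs pK; apply; rewrite -addnA; apply: ltn_addr.
  split.
    move=> j jm; split.
      have h1 : (K + j < K)%N = false by rewrite ltnNge leq_addr.
      have h2 : (K + j < K + m)%N by rewrite ltn_add2l.
      have := Hv (K + j)%N; rewrite /fs h1 h2 addKn; apply.
      by rewrite -addnA ltn_add2l; apply: ltn_addr.
    have h1 : (K + m + j < K)%N = false by rewrite -addnA ltnNge leq_addr.
    have h2 : (K + m + j < K + m)%N = false by rewrite ltnNge leq_addr.
    have h3 : (K + m + j - K - m)%N = j by rewrite -addnA addKn addKn.
    have := Hv (K + m + j)%N; rewrite /fs h1 h2 h3; apply; by rewrite ltn_add2l.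
  by apply: NNPP => H; apply: nv => p Hp; apply: NNPP => Hc; apply: H; exists p.
move=> H; exfalso; apply: NoDom.
exists (L + size cs)%N, (fun i => if (i < L)%N then e i else T' (cs`_(i - L))) => x.
have [y [Hy [a Ha]]] := Hcs x.
have Ty : forall p, (L <= p)%N -> crd p (T' y) = 0.
  by move=> p Hp; apply: NNPP => Hc; apply: H; exists y; split => // Hall; apply: Hc; apply: Hall.
exists (fun i => if (i < L)%N then crd i (T' y) else a (i - L)%N).
have -> : x = y + (x - y) by rewrite addrC subrK.
rewrite TD Ha (T_sum u mu (size cs) (fun k => a k *: cs`_k)) big_split_ord /=; congr (_ + _).
  by rewrite {1}(expand Hb Ty); apply: eq_bigr => i _; rewrite ltn_ord.
apply: eq_bigr => i _; rewrite ltnNge leq_addr /= addKn TZ.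
by [].
Qed.
End ExcR.

Definition rowOf (i : nat) : nat := (odflt (0%N, 0%N) (@unpickle (nat * nat)%type i)).1.

Lemma rowOf_pickle (n k : nat) : rowOf (pickle ((n, k) : nat * nat)) = n.
Proof. by rewrite /rowOf pickleK. Qed.

Lemma pickle_nk_inj (a b : nat * nat) : pickle a = pickle b -> a = b.
Proof. exact: (pcan_inj pickleK). Qed.

Section ExcRes.
Variables (F : fieldType) (V : lmodType F) (u : {linear V -> V}).
Variable e : nat -> V.
Hypothesis Hb : nat_basis e.
Variable mu : F.
Hypothesis NoDom : ~ finite_rank (T u mu).
Hypothesis Hex : finite_rank (fun x => T u mu (T u mu x)).
Hypothesis tors : torsion u.

Local Notation T' := (T u mu).
Local Notation crd := (coord e).
Local Notation nz := (nth (0, 0%N)).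

Definition SpecR (s : seq (V * nat)) (i : nat) (vp : V * nat) : Prop :=
  [/\ T' (T' vp.1) = 0,
   (forall j, (j < size s)%N -> crd (nz s j).2 vp.1 = 0 /\ crd (nz s j).2 (T' vp.1) = 0),
   crd vp.2 (T' vp.1) <> 0,
   (forall j, (j < size s)%N -> forall p, (vp.2 <= p)%N ->
       crd p (nz s j).1 = 0 /\ crd p (T' (nz s j).1) = 0) &
   (forall m, (m <= rowOf i)%N -> forall q p, (vp.2 <= p)%N -> crd p (pact u q (e m)) = 0)].

Lemma boundE r : exists L, forall m, (m <= r)%N -> forall q p, (L <= p)%N ->
  crd p (pact u q (e m)) = 0.
Proof.
elim: r => [|r [L HL]].
  have [t Ht] := fd_cyc (e 0%N) tors; have [L HL] := bound_span Hb t.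
  by exists L => m; rewrite leqn0 => /eqP -> q p Hp; apply: HL.
have [t Ht] := fd_cyc (e r.+1) tors; have [L' HL'] := bound_span Hb t.
exists (maxn L L') => m; rewrite leq_eqVlt => /orP [/eqP ->|mr] q p Hp.
  by apply: HL' => //; apply: leq_trans Hp; apply: leq_maxr.
by apply: HL => //; apply: leq_trans Hp; apply: leq_maxl.
Qed.

Lemma SpecR_ex s i : exists vp, SpecR s i vp.
Proof.
have [L1 H1] := bound_fin e (size s) (fun j => (nz s j).1).
have [L2 H2] := bound_fin e (size s) (fun j => T' (nz s j).1).
have [L3 H3] := boundE (rowOf i).
set L := maxn L1 (maxn L2 L3).
have [v [TTv [Hc [p [Lp Hp]]]]] := lemR Hb NoDom Hex (size s) (fun j => (nz s j).2) L.
exists (v, p); split => //=.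
- move=> j js p' Hp'; split.
    by apply: H1 => //; apply: leq_trans Hp'; apply: leq_trans Lp; apply: leq_maxl.
  apply: H2 => //; apply: leq_trans Hp'; apply: leq_trans Lp.
  by apply: leq_trans (leq_maxr _ _); apply: leq_maxl.
- move=> m mr q p' Hp'; apply: H3 => //; apply: leq_trans Hp'; apply: leq_trans Lp.
  by apply: leq_trans (leq_maxr _ _); apply: leq_maxr.
Qed.

Definition nextR (s : seq (V * nat)) (i : nat) : V * nat :=
  epsilon (inhabits (0, 0%N)) (SpecR s i).

Fixpoint resL i := match i with 0 => [::] | i'.+1 => rcons (resL i') (nextR (resL i') i') end.
Definition rw i := nextR (resL i) i.
Definition vr i := (rw i).1.
Definition pv i := (rw i).2.

Lemma resL_map i : resL i = map rw (iota 0 i).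
Proof.
elim: i => [//|i IH]; rewrite [resL i.+1]/= -/(rw i) IH -addn1 iotaD map_cat cats1.
by [].
Qed.

Lemma size_resL i : size (resL i) = i.
Proof. by rewrite resL_map size_map size_iota. Qed.

Lemma nth_resL i j : (j < i)%N -> nz (resL i) j = rw j.
Proof. by move=> ji; rewrite resL_map (nth_map 0%N) ?size_iota // nth_iota. Qed.

Lemma rw_spec i : SpecR (resL i) i (rw i).
Proof. by rewrite /rw /nextR; apply: epsilon_spec; apply: SpecR_ex. Qed.

Lemma R1 i : T' (T' (vr i)) = 0.
Proof. by have [] := rw_spec i. Qed.

Lemma R3 i : crd (pv i) (T' (vr i)) <> 0.
Proof. by have [] := rw_spec i. Qed.

Lemma Rk i j : j <> i -> crd (pv i) (vr j) = 0 /\ crd (pv i) (T' (vr j)) = 0.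
Proof.
move=> ji; case: (ltngtP j i) => [jlt|ilt|jeq]; last by case: ji.
  have [_ _ _ H _] := rw_spec i.
  by have := H j; rewrite size_resL nth_resL //; apply.
have [_ H _ _ _] := rw_spec j.
by have := H i; rewrite size_resL nth_resL //; apply.
Qed.

Lemma R5 i m q : (m <= rowOf i)%N -> crd (pv i) (pact u q (e m)) = 0.
Proof. by move=> mr; have [_ _ _ _ H] := rw_spec i; apply: H. Qed.

Lemma Rpact i j q : j <> i -> crd (pv i) (pact u q (vr j)) = 0.
Proof.
move=> ji; have [c1 c2] := Rk ji.
pose Z x := exists a b, x = a *: vr j + b *: T' (vr j).
have HZ : submodule u Z.
  split; first by exists 0, 0; rewrite !scale0r addr0.
  split.
    move=> x y [a [b ->]] [a' [b' ->]]; exists (a + a'), (b + b').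
    by rewrite !scalerDl addrACA.
  split.
    move=> k x [a [b ->]]; exists (k * a), (k * b).
    by rewrite scalerDr !scalerA.
  move=> x [a [b ->]]; exists (mu * a), (a + mu * b).
  rewrite (uT u mu (a *: vr j + b *: T' (vr j))) TD !TZ R1 scaler0 addr0.
  by rewrite [mu *: (_ + _)]scalerDr !scalerA [(a + mu * b) *: _]scalerDl addrCA.
have [a [b ->]] : Z (pact u q (vr j)).
  by apply: sub_pact => //; exists 1, 0; rewrite scale1r scale0r addr0.
by rewrite (coord_lin Hb) (coordZ Hb) c1 c2 !mulr0 addr0.
Qed.
End ExcRes.

Definition ltlex (a b : nat * nat) : Prop :=
  (a.1 < b.1)%N \/ (a.1 = b.1 /\ (a.2 < b.2)%N).

Lemma wo_lex : well_order ltlex.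
Proof.
split.
  by move=> [n k] [|[_]] /=; rewrite ltnn.
split.
  move=> [n1 k1] [n2 k2] [n3 k3]; rewrite /ltlex /=.
  move=> [h1|[-> h1]] [h2|[<- h2]]; first by left; apply: ltn_trans h1 h2.
  - by left.
  - by left.
  - by right; split => //; apply: ltn_trans h1 h2.
split.
  move=> [n1 k1] [n2 k2]; rewrite /ltlex /=.
  case: (ltngtP n1 n2) => [h|h|<-]; first by left; left.
    by right; right; left.
  case: (ltngtP k1 k2) => [h|h|<-]; first by left; right.
    by right; right; right.
  by right; left.
have H : forall N n, (n <= N)%N -> forall k, Acc ltlex (n, k).
  elim=> [|N IH] n nN.
    move: nN; rewrite leqn0 => /eqP -> k; elim: k {-2}k (leqnn k) => [|K IHK] k kK.
      constructor => [[m j]] [/=|[/= ->]]; first by rewrite ltn0.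
      by move: kK; rewrite leqn0 => /eqP ->; rewrite ltn0.
    constructor => [[m j]] [/=|[/= ->]]; first by rewrite ltn0.
    by move=> jk; apply: IHK; rewrite -ltnS; apply: leq_trans jk kK.
  move=> k; elim: k {-2}k (leqnn k) => [|K IHK] k kK.
    constructor => [[m j]] [/= mn|[/= -> j0]].
      by apply: IH; rewrite -ltnS; apply: leq_trans mn nN.
    by move: kK j0; rewrite leqn0 => /eqP ->; rewrite ltn0.
  constructor => [[m j]] [/= mn|[/= -> jk]].
    by apply: IH; rewrite -ltnS; apply: leq_trans mn nN.
  by apply: IHK; rewrite -ltnS; apply: leq_trans jk kK.
by move=> [n k]; apply: (H n).
Qed.

Section ExcFinal.
Variables (F : fieldType) (V : lmodType F) (u : {linear V -> V}).
Variable e : nat -> V.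
Hypothesis Hb : nat_basis e.
Variable mu : F.
Hypothesis NoDom : ~ finite_rank (T u mu).
Hypothesis Hex : finite_rank (fun x => T u mu (T u mu x)).
Hypothesis tors : torsion u.

Local Notation T' := (T u mu).
Local Notation crd := (coord e).

Definition vr2 (n k : nat) := vr u e mu (pickle ((n, k) : nat * nat)).
Definition pv2 (n k : nat) := pv u e mu (pickle ((n, k) : nat * nat)).

Definition gof (s : seq V) (b : nat * nat) : V :=
  if b.2 == 0%N then nth 0 s b.1 else vr2 b.1 b.2.

Definition nextL (s : seq V) (n : nat) : V :=
  match n with
  | 0 => vr2 0 0
  | n'.+1 => if excluded_middle_informative
                 (GenP u (gof s) (fun b => ltlex b (n, 0%N)) (e n'))
             then vr2 n 0 else e n'
  end.

Fixpoint limL n := match n with 0 => [::] | n'.+1 => rcons (limL n') (nextL (limL n') n') end.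
Definition lim n := nextL (limL n) n.
Definition g2 (b : nat * nat) : V := if b.2 == 0%N then lim b.1 else vr2 b.1 b.2.

Lemma limL_map n : limL n = map lim (iota 0 n).
Proof.
elim: n => [//|n IH]; rewrite [limL n.+1]/= -/(lim n) IH -addn1 iotaD map_cat cats1.
by [].
Qed.

Lemma gof_g2 n b : (b.1 < n)%N -> gof (limL n) b = g2 b.
Proof.
move=> bn; rewrite /gof /g2; case: ifP => // _.
by rewrite limL_map (nth_map 0%N) ?size_iota // nth_iota.
Qed.

Lemma lim_cases m : lim m = vr2 m 0 \/ (0 < m)%N /\ lim m = e m.-1.
Proof.
rewrite /lim; case: m => [|m] /=; first by left.
by destruct excluded_middle_informative; [left | right].
Qed.

Lemma kill n k b q : b <> (n, k) -> (b.1 <= n)%N ->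
  crd (pv2 n k) (pact u q (g2 b)) = 0.
Proof.
move=> bnk b1n; rewrite /pv2 /g2.
have Hv : forall c, c <> (n, k) -> crd (pv u e mu (pickle ((n, k) : nat * nat)))
    (pact u q (vr2 c.1 c.2)) = 0.
  move=> [c1 c2] cnk; apply: (Rpact Hb NoDom Hex tors) => /= H; apply: cnk; exact: pickle_nk_inj.
case: ifP => [/eqP b20|b20]; last exact: Hv.
have [->|[m0 ->]] := lim_cases b.1.
  by apply: (Hv (b.1, 0%N)); move: bnk; case: b b20 b1n => b1 b2 /= -> .
apply: (R5 Hb NoDom Hex tors); rewrite rowOf_pickle; apply: leq_trans b1n; exact: leq_pred.
Qed.

Lemma kill_gen n k P x : (forall b, P b -> b <> (n, k) /\ (b.1 <= n)%N) ->
  GenP u g2 P x -> crd (pv2 n k) x = 0.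
Proof.
move=> HP; apply: (sum_fam_sub (S := fun x => crd (pv2 n k) x = 0)).
- exact: coord0.
- by move=> x1 x2 h1 h2; rewrite (coordD Hb) h1 h2 addr0.
- by move=> b y Pb [q ->]; have [h1 h2] := HP b Pb; apply: kill.
Qed.

Lemma res_good n k P : (forall b, P b -> b <> (n, k) /\ (b.1 <= n)%N) ->
  good u (GenP u g2 P) (vr2 n k) /\ ~ GenP u g2 P (vr2 n k).
Proof.
move=> HP; have HS := GenP_sub u (0%N, 0%N) g2 P.
have gd : good u (GenP u g2 P) (vr2 n k).
  have h1 : ~ GenP u g2 P (T' (vr2 n k)).
    move=> H; apply: (R3 Hb NoDom Hex tors (i := pickle ((n, k) : nat * nat))); exact: kill_gen H.
  have h2 : GenP u g2 P (T' (T' (vr2 n k))).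
    by rewrite /vr2 (R1 Hb NoDom Hex tors); exact: (sub0 HS).
  exact: (goodG HS h1 h2).
by split => //; exact: (good_notin gd).
Qed.

Lemma below_ok n k b : ltlex b (n, k) -> b <> (n, k) /\ (b.1 <= n)%N.
Proof.
move=> H; split.
  by move=> E; move: H; rewrite E; have [irr _] := wo_lex; apply: irr.
by case: H => [/ltnW|[-> _]].
Qed.

Lemma Gen_gof n x : GenP u (gof (limL n)) (fun b => ltlex b (n, 0%N)) x <->
  GenP u g2 (fun b => ltlex b (n, 0%N)) x.
Proof.
have H : forall b, ltlex b (n, 0%N) -> (b.1 < n)%N.
  by move=> b [//|[_ /=]]; rewrite ltn0.
by split; apply: GenP_ext => b /H bn; rewrite gof_g2.
Qed.

Lemma exc_strat : has_good_stratification u.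
Proof.
apply: (@strat_of_gen F V u (nat * nat)%type ltlex g2).
- exact: wo_lex.
- by move=> [n k]; exists (n, k.+1); right.
- move=> [n [|k]].
    case: n => [|n].
      exact: (res_good (@below_ok 0 0)).2.
    rewrite /g2 /= /lim /=.
    destruct excluded_middle_informative as [hin|nin].
      exact: (res_good (@below_ok n.+1 0)).2.
    by rewrite -Gen_gof.
  exact: (res_good (@below_ok n k.+1)).2.
- move=> [n [|k]] Hms.
    case: n Hms => [|n] Hms.
      exact: (res_good (@below_ok 0 0)).1.
    exfalso; case: Hms => [Hm|[[m j] [Hbm Hs]]].
      by apply: (Hm (0%N, 0%N)); left.
    apply: (Hs (m, j.+1)); split; first by right; split.
    by case: Hbm => [/= mn|[_ /=]]; [left | rewrite ltn0].
  exact: (res_good (@below_ok n k.+1)).1.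
have He : forall j, GenP u g2 (fun _ => True) (e j).
  move=> j; case: (classic (GenP u g2 (fun b => ltlex b (j.+1, 0%N)) (e j))) => H.
    by apply: GenP_mono H.
  have -> : e j = g2 (j.+1, 0%N).
    rewrite /g2 /= /lim /=; destruct excluded_middle_informative as [h|h] => //.
    by exfalso; apply: H; rewrite -Gen_gof.
  exact: GenP_gen.
move=> x; have [_ sp] := Hb; have [n [c ->]] := sp x.
have := @sub_sum F V u (GenP u g2 (fun _ => True)) n (fun i => c i *: e i)
  (GenP_sub _ (0%N, 0%N) _ _); apply.
by move=> i _; apply: subZ; [exact: (GenP_sub _ (0%N, 0%N)) | exact: He].
Qed.
End ExcFinal.

Unset Implicit Arguments.

Theorem proposition5 (F : fieldType) (V : lmodType F) (u : {linear V -> V}) :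
  countably_infinite_dim V ->
  (forall l : F, ~ dominant_eigenvalue u l) ->
  torsion u ->
  has_good_stratification u.
Proof.
move=> [e Hb] NoDom tors.
case: (classic (exists mu, finite_rank (fun x => T u mu (T u mu x)))) => [[mu Hex]|NE].
  exact: (exc_strat Hb (NoDom mu) Hex tors).
apply: (nonexc_strat _ tors Hb) => l Hl; apply: NE; by exists l.
Qed.
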